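(* Let $u\in\Sigma^*$, $v\in\Sigma^+$. Let $(x_1,y_1)$ be the shortest form of $(u,v)$ and $n=|y_1|$. For $1\leq k<n$ let $(x_{k+1},y_{k+1})$ be the shortest form of the decomposition $(x_ky_k[1],\ y_k[2\cdots n]\,y_k[1])$. Let $\mathcal{D}_{u\$v}$ be a finite automaton over $\Sigma\cup\{\$\}$ (with $\$\notin\Sigma$) recognizing $\bigcup_{k=1}^{n}x_ky_k^*\,\$\,y_k^+$. Then $L(\mathcal{D}_{u\$v})=\{u'\$v'\mid u'\in\Sigma^*,\ v'\in\Sigma^+,\ u'v'^\omega=uv^\omega\}$.
   Context: A decomposition of an $\omega$-word $w$ is a pair $(u,v)$ with $u\in\Sigma^*$, $v\in\Sigma^+$ and $w=uv^\omega$. For a word $z$, $z[i]$ is its $i$-th letter and $z[i\cdots k]$ the subword from position $i$ to $k$ inclusive. Write $r\unlhd v$ if $r$ is a nonempty prefix of $v$, and $r\lhd v$ if moreover $r\neq v$. A smallest period of $(u,v)$ is a word $r$ with $r\unlhd v$, $r^\omega=v^\omega$, and $t^\omega\neq r^\omega$ for every $t\lhd r$. If $y$ is the smallest period of $(u,v)$, the shortest form of $(u,v)$ is the pair $(x,y)$ where $u=xy^i$, $v=y^j$ for some $i\geq0,j\geq1$ and $x$ is the shortest word with $u\in xy^*$. *)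

(* Defs.v *)
From mathcomp Require Import all_boot.
Set Implicit Arguments. Unset Strict Implicit. Unset Printing Implicit Defensive.

Section Words.
Variable T : finType.

(* omega-words are represented as functions nat -> option T
   (the option is only a device to avoid needing a default letter;
   all omega-words below take values Some _ only) *)
Definition oword := nat -> option T.

Definition oweq (a b : oword) : Prop := forall i, a i = b i.

Definition wpow (z : seq T) (i : nat) : seq T := flatten (nseq i z).

(* the omega-word u v^omega (for nonempty v); positions start at 0 *)
Definition uvw (u v : seq T) : oword := fun i =>
  if i < size u then nth None (map Some u) i
  else nth None (map Some v) ((i - size u) %% size v).

Definition omega (r : seq T) : oword := uvw [::] r.

Definition nprefix (r v : seq T) : bool := (0 < size r) && prefix r v.
Definition pprefix (r v : seq T) : bool := nprefix r v && (r != v).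

Definition smallest_period (u v r : seq T) : Prop :=
  [/\ nprefix r v, oweq (omega r) (omega v)
    & forall t, pprefix t r -> ~ oweq (omega t) (omega r)].

Definition shortest_form (u v x y : seq T) : Prop :=
  [/\ smallest_period u v y,
      (exists i, u = x ++ wpow y i),
      (exists2 j, 1 <= j & v = wpow y j)
    & forall x', (exists i, u = x' ++ wpow y i) -> size x <= size x'].

End Words.

Record dfa (A : Type) := DFA {
  dfa_state : finType;
  dfa_start : dfa_state;
  dfa_final : pred dfa_state;
  dfa_trans : dfa_state -> A -> dfa_state }.

Definition dfa_accept (A : Type) (D : dfa A) (w : seq A) : bool :=
  @dfa_final A D (foldl (@dfa_trans A D) (@dfa_start A D) w).

(* Alphabet Sigma ∪ {$}: letters of Sigma are [Some a], and $ is [None]. *)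
Definition dollar_word (T : finType) (u v : seq T) : seq (option T) :=
  map Some u ++ None :: map Some v.

(* Main.v *)
Require Import Defs.
From mathcomp Require Import all_boot.
From mathcomp Require Import zify.
Set Implicit Arguments. Unset Strict Implicit. Unset Printing Implicit Defensive.

Definition Per {A : Type} (f : nat -> A) (a p : nat) := forall i, a <= i -> f (i + p) = f i.

Lemma Per_mul A (f : nat -> A) a p i c : Per f a p -> a <= i -> f (i + c * p) = f i.
Proof.
move=> P ai; elim: c => [|c IH]; first by rewrite mul0n addn0.
by rewrite mulSn addnCA addnC P ?IH // (leq_trans ai (leq_addr _ _)).
Qed.

Lemma Per_mono A (f : nat -> A) a b p : Per f a p -> a <= b -> Per f b p.
Proof. by move=> P ab i bi; apply: P; apply: leq_trans bi. Qed.

Lemma Per_sub A (f : nat -> A) a p q : Per f a p -> Per f a q -> p < q -> Per f a (q - p).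
Proof.
move=> Pp Pq pq i ai.
rewrite -(Pp (i + (q - p))); last by apply: leq_trans ai (leq_addr _ _).
by rewrite -addnA subnK ?(ltnW pq) // Pq.
Qed.

Lemma Per_gcd A (f : nat -> A) a : forall s p q, p + q <= s -> 0 < p -> 0 < q ->
  Per f a p -> Per f a q -> Per f a (gcdn p q).
Proof.
elim=> [|s IH] p q hs hp hq Pp Pq; first by lia.
case: (ltngtP p q) => pq.
- rewrite -(subnKC (ltnW pq)) gcdnDl; apply: IH => //; first by lia.
  + by rewrite subn_gt0.
  + exact: Per_sub.
- rewrite gcdnC -(subnKC (ltnW pq)) gcdnDl; apply: IH => //; first by lia.
  + by rewrite subn_gt0.
  + exact: Per_sub.
- by rewrite pq gcdnn.
Qed.

Lemma Per_join A (f : nat -> A) a b q n : Per f a q -> Per f b n -> 0 < q -> Per f a n.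
Proof.
move=> Pq Pn hq i ai.
rewrite -(Per_mul b Pq (leq_trans ai (leq_addr n i))).
rewrite addnAC Pn ?(Per_mul _ Pq ai) //.
by apply: leq_trans (leq_addl _ _); rewrite leq_pmulr.
Qed.

Section W.
Implicit Types (T : finType).

Lemma uvw_lo T (x y : seq T) i : i < size x -> uvw x y i = nth None (map Some x) i.
Proof. by rewrite /uvw => ->. Qed.

Lemma uvw_hi T (x y : seq T) i : uvw x y (size x + i) = omega y i.
Proof. by rewrite /uvw /omega /uvw /= ltnNge leq_addr /= addKn subn0. Qed.

Lemma omega_per T (y : seq T) i : omega y (i + size y) = omega y i.
Proof. by rewrite /omega /uvw /= !subn0 modnDr. Qed.

Lemma omega_small T (y : seq T) i : i < size y -> omega y i = nth None (map Some y) i.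
Proof. by move=> h; rewrite /omega /uvw /= subn0 modn_small. Qed.

Lemma omega_mod T (y : seq T) i : omega y i = omega y (i %% size y).
Proof. by rewrite /omega /uvw /= !subn0 modn_mod. Qed.

Definition seg A (W : nat -> A) a b := mkseq (fun i => W (a + i)) b.

Lemma size_seg A (W : nat -> A) a b : size (seg W a b) = b.
Proof. exact: size_mkseq. Qed.

Lemma seg_cat T (W : oword T) a b c : seg W a (b + c) = seg W a b ++ seg W (a + b) c.
Proof.
apply: (@eq_from_nth _ None); first by rewrite size_cat !size_seg.
move=> i; rewrite size_seg => hi; rewrite nth_cat size_seg.
case: ltnP => h; first by rewrite !nth_mkseq.
rewrite !nth_mkseq; [congr W; lia| lia | done].
Qed.

Lemma seg_shift T (W : oword T) a p b c l : Per W a p -> a <= b ->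
  seg W (b + c * p) l = seg W b l.
Proof.
move=> P ab; apply: eq_mkseq => i.
by rewrite addnAC (Per_mul _ P) // (leq_trans ab (leq_addr _ _)).
Qed.

Lemma wpowS T (y : seq T) c : wpow y c.+1 = y ++ wpow y c.
Proof. by []. Qed.

Lemma size_wpow T (y : seq T) c : size (wpow y c) = c * size y.
Proof. by elim: c => // c IH; rewrite wpowS size_cat IH mulSn. Qed.

Lemma seg_pow T (W : oword T) a p (y : seq T) c : Per W a p ->
  seg W a p = map Some y -> seg W a (c * p) = map Some (wpow y c).
Proof.
move=> P hy; elim: c => [|c IH]; first by rewrite mul0n.
rewrite mulSn seg_cat hy wpowS map_cat; congr (_ ++ _).
by rewrite -{1}[p]mul1n (seg_shift (a:=a)).
Qed.

Lemma mapS_inj T (s t : seq T) : map Some s = map Some t -> s = t.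
Proof. exact/inj_map/Some_inj. Qed.

Lemma F1 T (x y : seq T) W : oweq (uvw x y) W -> seg W 0 (size x) = map Some x.
Proof.
move=> H; apply: (@eq_from_nth _ None); first by rewrite size_seg size_map.
move=> i; rewrite size_seg => hi; rewrite nth_mkseq // add0n -H uvw_lo //.
Qed.

Lemma F2 T (x y : seq T) W i : oweq (uvw x y) W -> W (size x + i) = omega y i.
Proof. by move=> H; rewrite -H uvw_hi. Qed.

Lemma F3 T (x y : seq T) W : oweq (uvw x y) W -> Per W (size x) (size y).
Proof.
move=> H i hi; rewrite -(subnKC hi) -addnA !(F2 _ H) omega_per //.
Qed.

Lemma F4 T (x y : seq T) W : oweq (uvw x y) W -> seg W (size x) (size y) = map Some y.
Proof.
move=> H; apply: (@eq_from_nth _ None); first by rewrite size_seg size_map.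
move=> i; rewrite size_seg => hi; rewrite nth_mkseq // (F2 _ H) omega_small //.
Qed.

Lemma oweq_trans T (a b c : oword T) : oweq a b -> oweq b c -> oweq a c.
Proof. by move=> h1 h2 i; rewrite h1 h2. Qed.

Lemma nth_wpow T (y : seq T) c t : t < c * size y ->
  nth None (map Some (wpow y c)) t = nth None (map Some y) (t %% size y).
Proof.
elim: c t => [|c IH] t; first by rewrite mul0n.
rewrite mulSn wpowS map_cat nth_cat size_map => ht.
case: ltnP => h; first by rewrite modn_small.
rewrite IH; last by lia.
by rewrite -{2}(subnK h) modnDr.
Qed.

Lemma L1 T (x y : seq T) i j : 0 < size y -> 0 < j ->
  uvw (x ++ wpow y i) (wpow y j) =1 uvw x y.
Proof.
move=> hy hj k; rewrite /uvw size_cat size_wpow map_cat nth_cat size_map.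
case: (ltnP k (size x)) => h1.
  by rewrite ltn_addr.
case: ltnP => h2.
  by rewrite nth_wpow //; lia.
rewrite nth_wpow; last by rewrite size_wpow ltn_pmod // muln_gt0 hj.
rewrite size_wpow (modn_dvdm _ (dvdn_mull _ (dvdnn _))).
have -> : k - size x = (k - (size x + i * size y)) + i * size y by lia.
by rewrite [in RHS]addnC modnMDl.
Qed.

Lemma L2 T (x y : seq T) : 0 < size y ->
  uvw (x ++ take 1 y) (drop 1 y ++ take 1 y) =1 uvw x y.
Proof.
case: y => [|a y'] // _ k; rewrite /= take0 drop0 /uvw size_cat /= size_cat /= !addn1.
case: (ltngtP k (size x)) => h.
- by rewrite ltnS ltnW // map_cat nth_cat size_map h.
- rewrite ltnS leqNgt h /=.
  have -> : k - size x = (k - (size x).+1).+1 by lia.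
  set s := k - (size x).+1.
  rewrite -[s.+1]addn1 -modnDml addn1.
  have : s %% (size y').+1 < (size y').+1 by rewrite ltn_pmod.
  rewrite ltnS leq_eqVlt; case/orP => hr.
    rewrite (eqP hr) modnn map_cat nth_cat size_map ltnn subnn /=.
    done.
  by rewrite (modn_small (m:=(s %% _).+1)) // map_cat nth_cat size_map hr.
- by rewrite h ltnSn subnn mod0n map_cat nth_cat size_map ltnn subnn.
Qed.
End W.

Lemma Per_omega (T : finType) (Y : seq T) : Per (omega Y) 0 (size Y).
Proof. by move=> i _; rewrite omega_per. Qed.

Lemma Per_of_W (T : finType) (X Y : seq T) W a p : oweq (uvw X Y) W -> Per W a p ->
  Per (omega Y) (a - size X) p.
Proof. move=> H P i hi; rewrite -!(F2 _ H) addnA; apply: P; lia. Qed.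

Lemma CP0 (T : finType) (Y : seq T) a p :
  (forall t, pprefix t Y -> ~ oweq (omega t) (omega Y)) -> 0 < size Y ->
  Per (omega Y) a p -> 0 < p -> size Y %| p.
Proof.
move=> prim hY Pp hp; set n := size Y.
have Pn : Per (omega Y) a n := Per_mono (Per_omega Y) (leq0n a).
set g := gcdn n p.
have hg : 0 < g by rewrite gcdn_gt0 hY.
have Pg : Per (omega Y) a g by apply: (@Per_gcd _ _ _ (n + p)).
have Pg0 : Per (omega Y) 0 g.
  move=> i _.
  rewrite -[in LHS](@Per_mul _ _ 0 _ (i + g) a (Per_omega Y) (leq0n _)) addnAC Pg.
    by rewrite (Per_mul _ (Per_omega Y)).
  by apply: leq_trans (leq_addl _ _); rewrite leq_pmulr.
case: (boolP (n %| p)) => // ndp; exfalso.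
have gn : g %| n by apply: dvdn_gcdl.
have gltn : g < n.
  rewrite ltn_neqAle dvdn_leq // andbT; apply/eqP => e.
  by move: ndp; rewrite -{1}e dvdn_gcdr.
apply: (prim (take g Y)).
  rewrite /pprefix /nprefix size_take -/n gltn hg prefix_take /=.
  by apply/eqP => e; move: (congr1 size e); rewrite size_take -/n gltn => e'; lia.
move=> i.
have hst : size (take g Y) = g by rewrite size_take -/n gltn.
rewrite omega_mod hst omega_small ?hst ?ltn_pmod //.
rewrite {2}(divn_eq i g) addnC (Per_mul _ Pg0) // omega_small; last first.
  by apply: ltn_trans gltn; rewrite ltn_pmod.
by rewrite map_take nth_take // ltn_pmod.
Qed.

Lemma SFstep (T : finType) (U V X Y : seq T) W : shortest_form U V X Y -> oweq (uvw U V) W ->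
 [/\ 0 < size Y <= size V, (forall t, pprefix t Y -> ~ oweq (omega t) (omega Y)),
     oweq (uvw X Y) W, (exists i, U = X ++ wpow Y i) &
     forall m, Per W m (size Y) -> m %% size Y = size X %% size Y -> size X <= m].
Proof.
case=> [[/andP[hY pY] _ prim]] [i hU] [j hj hV] hmin hW.
have hXY : oweq (uvw X Y) W.
  by move=> k; rewrite -(L1 X i hY hj) -hU -hV hW.
split => //; first by rewrite hY size_prefix.
  by exists i.
move=> m Pm hm.
have hsU : size U = size X + i * size Y by rewrite hU size_cat size_wpow.
case: (leqP (size U) m) => hUm; first by apply: leq_trans hUm; rewrite hsU leq_addr.
have e1 : size U %% size Y = m %% size Y.
  by rewrite hsU addnC modnMDl hm.
have hdvd : size Y %| size U - m.
  by rewrite -eqn_mod_dvd ?(ltnW hUm) // e1.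
set e := (size U - m) %/ size Y.
have he : size U - m = e * size Y by rewrite divnK.
have hsU2 : size U = m + e * size Y by lia.
have := hmin (take m U); rewrite size_take hUm; apply; exists e.
rewrite -{1}(cat_take_drop m U); congr (_ ++ _); apply: mapS_inj.
rewrite map_drop -(F1 hW) hsU2 seg_cat drop_size_cat ?size_seg //.
apply: seg_pow => //.
rewrite -(@seg_shift _ W m (size Y) m e (size Y) Pm (leqnn m)) -hsU2 hsU.
by rewrite (@seg_shift _ W (size X) (size Y) (size X) i (size Y) (F3 hXY)) // (F4 hXY).
Qed.

Lemma size_rot1 (T : finType) (y : seq T) : 0 < size y -> size (drop 1 y ++ take 1 y) = size y.
Proof. by case: y => [|a s] //= _; rewrite take0 drop0 size_cat addn1. Qed.

Lemma size_take1 (T : finType) (y : seq T) : 0 < size y -> size (take 1 y) = 1.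
Proof. by case: y => [|a s] //= _; rewrite take0. Qed.

Lemma ar1 d n r m : r < n -> d * n + r + (m + (n - r)) = d.+1 * n + m.
Proof. by move=> h; rewrite mulSn; lia. Qed.

Lemma ar2 m s en : s <= m -> m - s = en -> m = s + en.
Proof. lia. Qed.

Theorem proposition2 (T : finType) (u v : seq T) (x y : nat -> seq T) (n : nat)
  (D : dfa (option T)) :
  0 < size v ->
  shortest_form u v (x 1) (y 1) ->
  n = size (y 1) ->
  (forall k, 1 <= k < n ->
     shortest_form (x k ++ take 1 (y k)) (drop 1 (y k) ++ take 1 (y k))
                   (x k.+1) (y k.+1)) ->
  (forall w, dfa_accept D w <->
     exists k, [/\ 1 <= k <= n &
       exists i j, 1 <= j /\ w = dollar_word (x k ++ wpow (y k) i) (wpow (y k) j)]) ->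
  forall w, dfa_accept D w <->
     exists u' v', [/\ 0 < size v', w = dollar_word u' v'
                     & oweq (uvw u' v') (uvw u v)].
Proof.
move=> hv hsf hn hstep hD w; rewrite hD.
set W := uvw u v.
have Inv : forall k, 1 <= k <= n ->
  (exists U V, [/\ 0 < size V, oweq (uvw U V) W & shortest_form U V (x k) (y k)])
  /\ size (y k) = n /\ size (x k) %% n = (size (x 1) + k.-1) %% n.
  elim=> [|k IH] //= hkn.
  case: (posnP k) => hk0.
    subst k; split; last by rewrite hn addn0.
    by exists u, v.
  have hkk : 1 <= k <= n by rewrite hk0 ltnW.
  have [[U [V [hV hUV hsfk]]] [hyk hres]] := IH hkk.
  have [/andP[hY _] prim hXY [i0 hU0] _] := SFstep hsfk hUV.
  have hrot : oweq (uvw (x k ++ take 1 (y k)) (drop 1 (y k) ++ take 1 (y k))) W.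
    by move=> t; rewrite (L2 _ hY); exact: hXY.
  have hV' : 0 < size (drop 1 (y k) ++ take 1 (y k)) by rewrite size_rot1.
  have hk2 : 1 <= k < n by rewrite hk0 hkn.
  have hsf' := hstep k hk2.
  have [/andP[hY1 hY1le] _ hXY1 [i1 hU1] _] := SFstep hsf' hrot.
  have hsz : size (y k.+1) = n.
    have hle : size (y k.+1) <= n by rewrite -hyk -(size_rot1 hY).
    have hd : n %| size (y k.+1).
      rewrite -hyk; apply: (CP0 prim hY _ hY1).
      exact: (Per_of_W hXY (F3 hXY1)).
    by apply/eqP; rewrite eqn_leq hle dvdn_leq.
  split; first by exists (x k ++ take 1 (y k)), (drop 1 (y k) ++ take 1 (y k)).
  split => //.
  have hs : size (x k) + 1 = size (x k.+1) + i1 * n.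
    by move: (congr1 size hU1); rewrite !size_cat size_wpow hsz size_take1.
  have -> : size (x k.+1) %% n = (size (x k) + 1) %% n.
    by rewrite hs [size (x k.+1) + _]addnC modnMDl.
  by rewrite -modnDml hres modnDml -addnA addn1 (prednK hk0).
have [[U1 [V1 [hV1 hUV1 hsf1]]] _] := Inv 1 (ltac:(rewrite leqnn; case: (SFstep hsf (fun i => erefl)) => /andP[h _] *; by rewrite hn h)).
have [/andP[hn0 _] _ hXY1 _ _] := SFstep hsf (fun i => erefl).
rewrite -hn in hn0.
split.
  case=> k [hk [i [j [hj ->]]]].
  have [[U [V [hV hUV hsfk]]] [hyk _]] := Inv k hk.
  have [/andP[hY _] _ hXY _ _] := SFstep hsfk hUV.
  exists (x k ++ wpow (y k) i), (wpow (y k) j); split => //.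
    by rewrite size_wpow muln_gt0 hj.
  by move=> t; rewrite (L1 _ _ hY hj); exact: hXY.
case=> u' [v' [hq -> hW]].
set m := size u'.
have Pm : Per W m (size v') := F3 hW.
have P1 : Per W (size (x 1)) n by rewrite hn; exact: F3 hXY1.
have Pmn : Per W m n := Per_join Pm P1 hq.
have hnq : n %| size v'.
  rewrite hn; apply: (CP0 _ _ (Per_of_W hXY1 Pm) hq).
    by case: (SFstep hsf (fun i => erefl)).
  by rewrite -hn.
set a := size (x 1).
set k := ((m + (n - a %% n)) %% n).+1.
have hk : 1 <= k <= n by rewrite /k ltn_pmod.
have [[U [V [hV hUV hsfk]]] [hyk hres]] := Inv k hk.
have [_ _ hXY _ hmin] := SFstep hsfk hUV.
have hres2 : size (x k) %% n = m %% n.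
  rewrite hres /k /= -/a modnDmr {1}(divn_eq a n).
  move: (ltn_pmod a hn0); move: (a %/ n) (a %% n) => d r hr.
  rewrite ar1 //.
  by rewrite modnMDl.
have hxk : size (x k) <= m by apply: hmin; rewrite hyk.
have hdvd : n %| m - size (x k) by rewrite -eqn_mod_dvd // hres2.
set e := (m - size (x k)) %/ n.
have he : m - size (x k) = e * n by rewrite divnK.
have hm2 : m = size (x k) + e * n by apply: ar2.
have Pxk : Per W (size (x k)) n by rewrite -hyk; exact: F3 hXY.
have segy : seg W (size (x k)) n = map Some (y k) by rewrite -hyk; exact: F4 hXY.
exists k; split => //.
exists e, (size v' %/ n); split.
  by rewrite divn_gt0 // dvdn_leq.
congr dollar_word; apply: mapS_inj.
  rewrite -(F1 hW) -/m hm2 seg_cat (F1 hXY) map_cat; congr (_ ++ _).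
  exact: seg_pow.
rewrite -(F4 hW) -/m -{1}(divnK hnq); apply: seg_pow => //.
by rewrite hm2 (seg_shift _ _ Pxk).
Qed.
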